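(* Every GSWNC ring $R$ is Dedekind-finite, i.e., whenever $a,b \in R$ satisfy $ab = 1$, then $ba = 1$.
   Context: All rings are associative with identity. An element $a$ of a ring is strongly weakly nil-clean if there exist an idempotent $e$ and a nilpotent $q$ with $eq = qe$ such that $a = q + e$ or $a = q - e$. A ring is GSWNC if every non-invertible element is strongly weakly nil-clean. *)

(* Defs.v *)
From HB Require Import structures.
From mathcomp Require Import all_boot all_order all_algebra.
Set Implicit Arguments. Unset Strict Implicit. Unset Printing Implicit Defensive.
Import GRing.Theory.
Local Open Scope ring_scope.

Definition idempotent_el (R : ringType) (e : R) : Prop := e * e = e.
Definition nilpotent_el (R : ringType) (q : R) : Prop := exists n : nat, q ^+ n = 0.

Definition strongly_weakly_nil_clean (R : ringType) (a : R) : Prop :=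
  exists e q : R, idempotent_el e /\ nilpotent_el q /\ e * q = q * e /\
    (a = q + e \/ a = q - e).

Definition GSWNC (R : unitRingType) : Prop :=
  forall a : R, ~~ (a \is a GRing.unit) -> strongly_weakly_nil_clean a.

(* Main.v *)
Require Import Defs.
From HB Require Import structures.
From mathcomp Require Import all_boot all_order all_algebra.
Local Open Scope ring_scope.
Import GRing.Theory.


Lemma pow_inv (R : ringType) (a b : R) : a * b = 1 -> forall n, a ^+ n * b ^+ n = 1.
Proof.
move=> ab; elim=> [|n IH]; first by rewrite !expr0 mulr1.
by rewrite exprSr exprS mulrA -(mulrA _ a) ab mulr1 IH.
Qed.

Lemma cancel_nil (R : ringType) (x q : R) (s : R) : (s = 1 \/ s = -1) ->
  x * (q + s) = 0 -> (exists n, q ^+ n = 0) -> x = 0.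
Proof.
move=> hs hx [n hn].
have key : forall k, x = x * ((- s) * q) ^+ k.
  elim=> [|k IH]; first by rewrite expr0 mulr1.
  rewrite exprSr (mulrA x) -IH.
  move: hx; rewrite mulrDr; case: hs => -> /eqP.
    by rewrite addr_eq0 mulr1 => /eqP; rewrite mulN1r mulrN => ->; rewrite opprK.
  by rewrite mulrN1 subr_eq0 => /eqP; rewrite opprK mul1r.
have cs : (- s) * q = q * (- s) by case: hs => ->; rewrite ?opprK ?mulN1r ?mulrN1 ?mul1r ?mulr1.
by rewrite (key n) exprMn_comm // hn !mulr0.
Qed.

Theorem corollary2p36 (R : unitRingType) :
  GSWNC R -> forall a b : R, a * b = 1 -> b * a = 1.
Proof.
move=> H a b ab.
case: (boolP (b \is a GRing.unit)) => bu.
  have -> : a = b^-1 by rewrite -[a]mulr1 -(divrr bu) mulrA ab mul1r.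
  by rewrite divrr.
have [e [q [he [[n hn] [eq hb]]]]] := H b bu.
set f : R := 1 - e.
have fq : f * q = q * f by rewrite /f mulrBl mulrBr mul1r mulr1 eq.
have ff : f * f = f by rewrite /f mulrBl mul1r mulrBr mulr1 he subrr subr0.
have bf : b * f = q * f.
  have ef : e * f = 0 by rewrite /f mulrBr mulr1 he subrr.
  case: hb => ->; rewrite ?mulrDl ?mulrBl.
  - by rewrite -[X in _ = X]addr0; congr (_ + _).
  - by rewrite -[X in _ = X]subr0 mulNr; congr (_ - _); exact: ef.
have bkf : forall k, b ^+ k * f = q ^+ k * f.
  elim=> [|k IH]; first by rewrite !expr0.
  by rewrite exprSr -mulrA bf -fq mulrA IH -mulrA fq mulrA -exprSr.
have f0 : f = 0.
  by rewrite -[f]mul1r -(@pow_inv _ _ _ ab n) -mulrA bkf hn mul0r mulr0.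
have e1 : e = 1 by apply/eqP; rewrite eq_sym -subr_eq0 -/f f0.
have xb : (b * a - 1) * b = 0 by rewrite mulrBl mul1r -mulrA ab mulr1 subrr.
apply/eqP; rewrite -subr_eq0; apply/eqP.
case: hb => hb'; rewrite e1 in hb'; rewrite [X in _ * X = 0]hb' in xb.
  by apply: (@cancel_nil _ (b * a - 1) q 1) => //; [left | exists n].
by apply: (@cancel_nil _ (b * a - 1) q (-1)) => //; [right | exists n].
Qed.
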